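(* Let $P$ be a $d$-dimensional convex polytope and $O$ an acyclic orientation of its graph $G_P$. Then $f^O=\sum_{i=0}^d f_i(P)$ if and only if all of the following hold: (1) each nonempty face $F$ of $P$ has a unique sink (of $G_F$ with respect to $O$); (2) each nonempty face $F$ of $P$ is simple at its sink, i.e. the sink has degree $\dim F$ in $G_F$; (3) for each vertex $v$ of $P$, there is a face of $P$ which has $v$ as its sink and contains every edge of $P$ oriented towards $v$.
   Context: The graph $G_P=(V_P,E_P)$ of a polytope $P$ has vertex set the vertices of $P$, with two vertices adjacent iff some $1$-dimensional face of $P$ contains both; for a face $F$, $G_F$ is its graph, oriented by restricting $O$. $f_i(P)$ is the number of $i$-dimensional faces of $P$. For an orientation $O$ of a graph $G=(V,E)$, $f^O:=\sum_{v\in V}2^{\operatorname{indeg}(v)}$. A sink of a graph with respect to an orientation is a vertex all of whose incident edges are oriented towards it. *)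

(* Defs.v *)
(* A polytope P in R^n (R an ordered field) is given by the
   finite family of its vertices V : T -> 'rV[R]_n, T a finType. *)
From HB Require Import structures.
From mathcomp Require Import all_boot all_order all_algebra.
From mathcomp Require Import boolp.
Set Implicit Arguments. Unset Strict Implicit. Unset Printing Implicit Defensive.
Import Order.TTheory GRing.Theory Num.Theory.
Local Open Scope ring_scope.

Section Polytope.
Variables (R : realFieldType) (n : nat) (T : finType) (V : T -> 'rV[R]_n).

Definition dotv (c x : 'rV[R]_n) : R := \sum_(k < n) c 0 k * x 0 k.

Definition in_conv_of (A : {set T}) (x : 'rV[R]_n) : Prop :=
  exists lam : T -> R,
    [/\ forall j, 0 <= lam j, forall j, j \notin A -> lam j = 0,
        \sum_j lam j = 1 & \sum_j lam j *: V j = x].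

(* every V i is a vertex (extreme point) of conv(V): it is not a convex
   combination of the other points (this also forces V injective). *)
Definition convex_position : Prop :=
  forall i, ~ in_conv_of [set~ i] (V i).

(* nonempty faces of P = conv(V), identified by their vertex sets:
   the vertices maximizing a linear functional c (c = 0 gives P itself) *)
Definition is_face (F : {set T}) : Prop :=
  exists c : 'rV[R]_n, F = [set i | [forall j, dotv c (V j) <= dotv c (V i)]].

(* dimension of (the face with vertex set) F = dim of its affine hull *)
Definition fdim (F : {set T}) : nat :=
  \dim <<[seq V i - V j | i <- enum F, j <- enum F]>>%VS.

Definition fnum (i : nat) : nat :=
  #|[set F : {set T} | `[< is_face F /\ fdim F = i >] ]|.

Definition adj (u v : T) : Prop :=
  u <> v /\ exists F, [/\ is_face F, fdim F = 1%N, u \in F & v \in F].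

(* O u v means the edge {u,v} is oriented u -> v *)
Definition orientation (O : rel T) : Prop :=
  (forall u v, O u v -> adj u v) /\
  (forall u v, adj u v -> (O u v /\ ~ O v u) \/ (O v u /\ ~ O u v)).

Definition acyclic (O : rel T) : Prop :=
  forall u v, O u v -> ~~ connect O v u.

Definition indeg (O : rel T) (v : T) : nat := #|[set u | O u v]|.

Definition fO (O : rel T) : nat := \sum_(v : T) 2 ^ indeg O v.

(* G_F: vertices F, edges = edges of P contained in F (these are the
   1-faces of F). Sink of G_F w.r.t. O. *)
Definition sink_of (O : rel T) (F : {set T}) (v : T) : Prop :=
  v \in F /\ forall u, u \in F -> adj u v -> O u v.

Definition deg_in (F : {set T}) (v : T) : nat :=
  #|[set u in F | `[< adj u v >] ]|.

End Polytope.

(* Main.v *)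
Require Import Defs.
From HB Require Import structures.
From mathcomp Require Import all_boot all_order all_algebra.
From mathcomp Require Import boolp ring lra.
Set Implicit Arguments. Unset Strict Implicit. Unset Printing Implicit Defensive.
Import Order.TTheory GRing.Theory Num.Theory.
Local Open Scope ring_scope.



Section Aux.
Variable R : realFieldType.
Variable n : nat.
Implicit Types (c x y : 'rV[R]_n).

Lemma dotvDr c x y : dotv c (x + y) = dotv c x + dotv c y.
Proof. by rewrite /dotv -big_split; apply: eq_bigr => k _; rewrite mxE mulrDr. Qed.
Lemma dotvZr c a x : dotv c (a *: x) = a * dotv c x.
Proof. by rewrite /dotv mulr_sumr; apply: eq_bigr => k _; rewrite mxE mulrCA. Qed.
Lemma dotvNr c x : dotv c (- x) = - dotv c x.
Proof. by rewrite -scaleN1r dotvZr mulN1r. Qed.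
Lemma dotvBr c x y : dotv c (x - y) = dotv c x - dotv c y.
Proof. by rewrite dotvDr dotvNr. Qed.
Lemma dotv0r c : dotv c 0 = 0.
Proof. by rewrite -(scale0r 0) dotvZr mul0r. Qed.
Lemma dotvDl c1 c2 x : dotv (c1 + c2) x = dotv c1 x + dotv c2 x.
Proof. by rewrite /dotv -big_split; apply: eq_bigr => k _; rewrite mxE mulrDl. Qed.
Lemma dotvZl a c x : dotv (a *: c) x = a * dotv c x.
Proof. by rewrite /dotv mulr_sumr; apply: eq_bigr => k _; rewrite mxE mulrA. Qed.
Lemma dotvNl c x : dotv (- c) x = - dotv c x.
Proof. by rewrite -scaleN1r dotvZl mulN1r. Qed.
Lemma dotv0l x : dotv 0 x = 0.
Proof. by rewrite -(scale0r (0 : 'rV[R]_n)) dotvZl mul0r. Qed.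
Lemma dotv_sumr (I : Type) (r : seq I) (P : pred I) c (F : I -> 'rV[R]_n) :
  dotv c (\sum_(i <- r | P i) F i) = \sum_(i <- r | P i) dotv c (F i).
Proof. exact: (big_morph _ (dotvDr c) (dotv0r c)). Qed.

Lemma lin_dotv (f : 'rV[R]_n -> R) :
  (forall x y, f (x + y) = f x + f y) -> (forall a x, f (a *: x) = a * f x) ->
  exists c, forall x, dotv c x = f x.
Proof.
move=> fD fZ; exists (\row_k f (delta_mx 0 k)) => x.
have f0 : f 0 = 0 by rewrite -(scale0r 0) fZ mul0r.
rewrite {2}(row_sum_delta x) (big_morph _ fD f0) /dotv.
by apply: eq_bigr => k _; rewrite fZ mxE mulrC.
Qed.

Lemma dotv_self_gt0 x : x != 0 -> 0 < dotv x x.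
Proof.
move=> nx; have [k xk] : exists k, x 0 k != 0.
  apply/existsP; apply: contraR nx => /existsPn H; apply/eqP/matrixP => i j.
  by rewrite (ord1 i) mxE; apply/eqP; move: (H j); rewrite negbK.
rewrite /dotv (bigD1 k) //= ltr_pwDl //.
  by rewrite -expr2 lt_def sqr_ge0 andbT sqrf_eq0.
by rewrite sumr_ge0 // => i _; rewrite -expr2 sqr_ge0.
Qed.

Lemma le_sum_term (I : finType) (P : pred I) (F : I -> R) i :
  P i -> (forall j, P j -> 0 <= F j) -> F i <= \sum_(j | P j) F j.
Proof. by move=> Pi H; rewrite (bigD1 i) //= lerDl sumr_ge0 // => j /andP[/H]. Qed.

Lemma big_t (I : finType) (A : pred I) (p q : I -> R) :
  (forall i, A i -> 0 < q i) -> exists t, 0 < t /\ forall i, A i -> p i < t * q i.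
Proof.
move=> qp; exists (1 + \sum_(i | A i) `|p i| / q i); split.
  by rewrite ltr_pwDl // sumr_ge0 // => i Ai; rewrite divr_ge0 // ltW // qp.
move=> i Ai; rewrite mulrDl mul1r.
have H : `|p i| / q i <= \sum_(j | A j) `|p j| / q j.
  by apply: le_sum_term => // j Aj; rewrite divr_ge0 // ltW // qp.
apply: (lt_le_trans (y := q i + `|p i|)).
  by apply: (le_lt_trans (ler_norm (p i))); rewrite ltr_pwDl // qp.
rewrite lerD2l; rewrite -(ler_pM2r (qp i Ai)) in H.
by apply: le_trans H; rewrite divfK // gt_eqF // qp.
Qed.


Lemma exists_max (I : finType) (A : {set I}) (f : I -> R) j0 :
  j0 \in A -> exists2 j, j \in A & forall i, i \in A -> f i <= f j.
Proof.
move=> j0A; case: (@arg_maxP _ R I j0 (mem A) f j0A) => j jA H.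
by exists j => // i iA; apply: H.
Qed.

Lemma exists_min (I : finType) (A : {set I}) (f : I -> R) j0 :
  j0 \in A -> exists2 j, j \in A & forall i, i \in A -> f j <= f i.
Proof.
move=> j0A; case: (@arg_minP _ R I j0 (mem A) f j0A) => j jA H.
by exists j => // i iA; apply: H.
Qed.

Lemma sum_delta (I : finType) (k : I) (F : I -> 'rV[R]_n) :
  \sum_j (j == k)%:R *: F j = F k.
Proof.
rewrite (bigD1 k) //= eqxx scale1r big1 ?addr0 // => j /negbTE ->.
by rewrite scale0r.
Qed.

Lemma sum_deltaR (I : finType) (k : I) :
  \sum_j (j == k)%:R = 1 :> R.
Proof.
by rewrite (bigD1 k) //= eqxx big1 ?addr0 // => j /negbTE ->.
Qed.

Lemma gordan (I : finType) (A : {set I}) (a : I -> 'rV[R]_n) :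
  (exists mu : I -> R, [/\ forall j, 0 <= mu j, forall j, j \notin A -> mu j = 0,
      \sum_j mu j = 1 & \sum_j mu j *: a j = 0])
  \/ (exists c, forall j, j \in A -> dotv c (a j) < 0).
Proof.
move: {2}#|A| (erefl #|A|) => m; elim: m A a => [|m IH] A a cardA.
  by right; exists 0 => j; rewrite (cards0_eq cardA) inE.
have [k kA] : exists k, k \in A.
  by apply/set0Pn; rewrite -card_gt0 cardA.
set A' := A :\ k.
have cardA' : #|A'| = m.
  by move: cardA; rewrite (cardsD1 k A) kA add1n => -[].
have inA' j : (j \in A') = (j != k) && (j \in A) by rewrite in_setD1.
case: (IH A' a cardA') => [[mu [mu0 muA' mu1 muS]] | [c' Hc']].
  left; exists mu; split => // j jA; apply: muA'.
  by rewrite inA' (negbTE jA) andbF.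
set al := dotv c' (a k).
case: (ltP al 0) => [allt | alge].
  right; exists c' => j jA; case: (eqVneq j k) => [->//|jk].
  by apply: Hc'; rewrite inA' jk jA.
case: (set_0Vmem A') => [A'0 | [j0 j0A']].
  have Ak j : j \in A -> j = k.
    move=> jA; apply/eqP; apply: contraTT jA => jk.
    by move/setP: A'0 => /(_ j); rewrite inA' inE jk /= => ->.
  case: (eqVneq (a k) 0) => [ak0 | ak0].
    left; exists (fun j => (j == k)%:R); split.
    - by move=> j; rewrite ler0n.
    - by move=> j jA; case: eqP => // jk; rewrite jk kA in jA.
    - exact: sum_deltaR.
    - by rewrite sum_delta.
  right; exists (- a k) => j /Ak ->.
  by rewrite dotvNl oppr_lt0 dotv_self_gt0.
pose b j := al *: a j - dotv c' (a j) *: a k.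
have dotb c j : dotv c (b j) = al * dotv c (a j) - dotv c' (a j) * dotv c (a k).
  by rewrite /b dotvBr !dotvZr.
case: (IH A' b cardA') => [[mu [mu0 muA' mu1 muS]] | [c'' Hc'']].
  left.
  set be := - \sum_j mu j * dotv c' (a j).
  have be_gt0 : 0 < be.
    have [jm jmA Hjm] := exists_max (fun j => dotv c' (a j)) j0A'.
    rewrite /be oppr_gt0.
    apply: (le_lt_trans (y := \sum_j mu j * dotv c' (a jm))).
      apply: ler_sum => j _; case: (boolP (j \in A')) => jA'.
        by rewrite ler_wpM2l // Hjm.
      by rewrite muA' // !mul0r.
    by rewrite -mulr_suml mu1 mul1r Hc'.
  have E : \sum_j mu j *: b j = al *: \sum_j mu j *: a j + be *: a k.
    rewrite /b /be.
    under eq_bigr do rewrite scalerBr !scalerA.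
    rewrite sumrB -!scaler_suml scaleNr; congr (_ + _).
    by rewrite scaler_sumr; apply: eq_bigr => j _; rewrite scalerA mulrC.
  have key : al *: \sum_j mu j *: a j + be *: a k = 0 by rewrite -E.
  have abe : 0 < al + be by rewrite ltr_wpDl.
  exists (fun j => (al * mu j + be * (j == k)%:R) / (al + be)); split.
  - move=> j; apply: divr_ge0; last exact: ltW.
    by rewrite addr_ge0 // mulr_ge0 // ?ltW.
  - move=> j jA; rewrite muA'; last by rewrite inA' (negbTE jA) andbF.
    by case: eqP => [jk|_]; [rewrite jk kA in jA | rewrite !mulr0 addr0 mul0r].
  - rewrite -mulr_suml big_split /= -!mulr_sumr mu1 sum_deltaR !mulr1.
    by rewrite divff // gt_eqF.
  - under eq_bigr do rewrite mulrC -scalerA.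
    rewrite -scaler_sumr.
    under eq_bigr do rewrite scalerDl -!scalerA.
    by rewrite big_split /= -!scaler_sumr sum_delta key scaler0.
right.
case: (eqVneq al 0) => [al0 | alne].
  have c''k : dotv c'' (a k) < 0.
    have := Hc'' j0 j0A'; rewrite dotb al0 mul0r sub0r oppr_lt0.
    have := Hc' j0 j0A'; set x := dotv c' (a j0); set y := dotv c'' (a k).
    by move=> xlt; rewrite nmulr_rgt0.
  have qpos j : j \in A' -> 0 < - dotv c' (a j) by move=> jA; rewrite oppr_gt0 Hc'.
  have [t [t0 Ht]] := big_t (fun j => dotv c'' (a j)) qpos.
  exists (c'' + t *: c') => j jA; rewrite dotvDl dotvZl.
  case: (eqVneq j k) => [->|jk]; first by rewrite -/al al0 mulr0 addr0.
  have jA' : j \in A' by rewrite inA' jk jA.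
  by have := Ht j jA'; rewrite mulrN; lra.
have alp : 0 < al by rewrite lt_def alne alge.
set s0 := - dotv c'' (a k) / al.
pose X j := dotv c'' (a j) + s0 * dotv c' (a j).
have XE j : X j = dotv c'' (b j) / al.
  by rewrite dotb /X /s0; field.
have Xlt j : j \in A' -> X j < 0.
  by move=> jA; rewrite XE ltr_pdivrMr // mul0r; apply: Hc''.
have qpos j : j \in A' -> 0 < - X j by move=> jA; rewrite oppr_gt0 Xlt.
have [t [t0 Ht]] := big_t (fun j => - dotv c' (a j)) qpos.
exists (c'' + (s0 - t^-1) *: c') => j jA; rewrite dotvDl dotvZl.
case: (eqVneq j k) => [->|jk].
  rewrite -/al /s0.
  have -> : (- dotv c'' (a k) / al - t^-1) * al = - dotv c'' (a k) - t^-1 * al.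
    by field; rewrite alne gt_eqF.
  by rewrite addrA addrN sub0r oppr_lt0 mulr_gt0 // invr_gt0.
have jA' : j \in A' by rewrite inA' jk jA.
have h : t^-1 * (- dotv c' (a j)) < - X j.
  by rewrite mulrC ltr_pdivrMr // mulrC; apply: Ht.
have -> : dotv c'' (a j) + (s0 - t^-1) * dotv c' (a j) = X j + t^-1 * (- dotv c' (a j)).
  by rewrite /X; ring.
lra.
Qed.

End Aux.



Section Poly.
Variable R : realFieldType.
Variable n : nat.
Variable T : finType.
Variable V : T -> 'rV[R]_n.

Definition am (c : 'rV[R]_n) (F : {set T}) :=
  [set y in F | [forall x in F, dotv c (V x) <= dotv c (V y)]].
Definition nb (F : {set T}) v := [set u in F | `[< adj V u v >]].

Lemma V_inj : convex_position V -> injective V.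
Proof.
move=> cp i j Vij; apply/eqP; apply/negPn/negP => ij.
apply: (cp i); exists (fun k => (k == j)%:R); split.
- by move=> k; rewrite ler0n.
- by move=> k; rewrite !inE negbK => /eqP ->; rewrite (negbTE ij).
- exact: sum_deltaR.
- by rewrite sum_delta Vij.
Qed.

Lemma expose : convex_position V -> forall v, exists c,
  forall y, y != v -> dotv c (V y) < dotv c (V v).
Proof.
move=> cp v; case: (gordan [set~ v] (fun j => V j - V v)) => [[mu [mu0 muA mu1 muS]] | [c Hc]].
  exfalso; apply: (cp v); exists mu; split => //.
  move: muS; under eq_bigr do rewrite scalerBr.
  rewrite sumrB -scaler_suml mu1 scale1r => /eqP; rewrite subr_eq0 => /eqP //.
exists c => y yv; have := Hc y; rewrite !inE yv dotvBr => /(_ isT).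
by rewrite subr_lt0.
Qed.

Lemma faceP F : is_face V F -> exists c,
  forall y, y \in F <-> (forall x, dotv c (V x) <= dotv c (V y)).
Proof.
case=> c ->; exists c => y; rewrite inE; split.
  by move/forallP.
by move=> H; apply/forallP.
Qed.

Lemma face_setT : is_face V [set: T].
Proof.
exists 0; apply/setP => y; rewrite !inE; apply/esym/forallP => x.
by rewrite !dotv0l.
Qed.

Lemma face_elem F (i0 : T) : is_face V F -> exists y, y \in F.
Proof.
move=> /faceP [c Hc].
have [y _ Hy] := exists_max (fun x => dotv c (V x)) (in_setT i0).
by exists y; apply/Hc => x; apply: Hy; rewrite in_setT.
Qed.

Lemma subface G c' y0 : is_face V G -> y0 \in G -> is_face V (am c' G).
Proof.
move=> /faceP [cG HG] y0G.
have [h hG Hh] := exists_max (fun x => dotv c' (V x)) y0G.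
have hH : h \in am c' G by rewrite inE hG; apply/forallP => x; apply/implyP => /Hh.
pose p x := \sum_y `|dotv c' (V x) - dotv c' (V y)|.
pose q x := dotv cG (V y0) - dotv cG (V x).
have Gmax y : y \in G -> dotv cG (V y) = dotv cG (V y0).
  move=> yG; apply/eqP; rewrite eq_le; apply/andP; split.
    by move/HG: y0G; apply.
  by move/HG: yG; apply.
have qpos x : x \notin G -> 0 < q x.
  move=> xG; rewrite /q subr_gt0; rewrite ltNge; apply: contra xG => H.
  apply/HG => z; apply: le_trans H; exact/(proj1 (HG y0)).
have [la [la0 Hla]] := big_t p qpos.
pose c := c' + la *: cG.
have strict x y : x \notin G -> y \in G -> dotv c (V x) < dotv c (V y).
  move=> xG yG; rewrite /c !dotvDl !dotvZl.
  have h1 := Hla x xG; rewrite /q -(Gmax y yG) in h1.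
  have h2 : dotv c' (V x) - dotv c' (V y) <= p x.
    apply: le_trans (ler_norm _) _.
    by apply: (le_sum_term (P := xpredT)) => // z _.
  lra.
exists c; apply/setP => y; rewrite !inE; apply/andP/forallP.
  case=> yG /forallP Hy x; case: (boolP (x \in G)) => xG.
    rewrite /c !dotvDl !dotvZl (Gmax x xG) (Gmax y yG) lerD2r.
    by move/implyP: (Hy x); apply.
  by apply: ltW; apply: strict.
move=> Hy.
have yG : y \in G.
  apply: contraLR (Hy h) => yG; rewrite -ltNge; apply: strict => //.
split => //; apply/forallP => x; apply/implyP => xG.
by move: (Hy x); rewrite /c !dotvDl !dotvZl (Gmax x xG) (Gmax y yG) lerD2r.
Qed.

End Poly.



Section Lin.
Variable R : realFieldType.
Variable n : nat.

Lemma solve_free (k : nat) (W : k.-tuple 'rV[R]_n) (b : 'I_k -> R) :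
  free W -> exists c, forall i : 'I_k, dotv c W`_i = b i.
Proof.
move=> fW.
pose f x := \sum_i b i * coord W i x.
have fD x y : f (x + y) = f x + f y.
  by rewrite /f -big_split; apply: eq_bigr => i _; rewrite linearD mulrDr.
have fZ a x : f (a *: x) = a * f x.
  by rewrite /f mulr_sumr; apply: eq_bigr => i _; rewrite scalarZ mulrCA.
have [c Hc] := lin_dotv fD fZ.
exists c => j; rewrite Hc /f (bigD1 j) //= coord_free // eqxx mulr1 big1 ?addr0 //.
by move=> i ij; rewrite coord_free // eq_sym (negbTE ij) mulr0.
Qed.

Lemma sep (U : {vspace 'rV[R]_n}) y : y \notin U ->
  exists c, (forall w, w \in U -> dotv c w = 0) /\ dotv c y = 1.
Proof.
move=> yU.
pose X := [tuple of y :: vbasis U].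
have fX : free X.
  by rewrite free_cons (span_basis (vbasisP U)) yU; case/andP: (vbasisP U).
have [c Hc] := solve_free (fun i : 'I_(\dim U).+1 => (i == ord0)%:R) fX.
exists c; split; last by have := Hc ord0.
move=> w /coord_vbasis ->; rewrite dotv_sumr big1 // => i _.
by rewrite dotvZr; have := Hc (lift ord0 i); rewrite /= => ->; rewrite mulr0.
Qed.

End Lin.

Section Dim.
Variable R : realFieldType.
Variable n : nat.
Variable T : finType.
Variable V : T -> 'rV[R]_n.

Definition DF (F : {set T}) := <<[seq V i - V j | i <- enum F, j <- enum F]>>%VS.

Lemma fdimE F : fdim V F = \dim (DF F).
Proof. by []. Qed.

Lemma memD (F : {set T}) i j : i \in F -> j \in F -> V i - V j \in DF F.
Proof.
by move=> iF jF; apply: memv_span; apply: (allpairs_f (fun i j => V i - V j)); rewrite mem_enum.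
Qed.

Lemma D_sub (F : {set T}) v (U : {vspace 'rV[R]_n}) : v \in F -> (forall x, x \in F -> V x - V v \in U) -> (DF F <= U)%VS.
Proof.
move=> vF H; apply/span_subvP => w /allpairsP [[i j] [/= iF jF ->]].
rewrite mem_enum in iF; rewrite mem_enum in jF.
have -> : V i - V j = (V i - V v) - (V j - V v) by rewrite opprB addrA subrK.
by apply: memvB; apply: H.
Qed.

Lemma fdim_le1 (F : {set T}) v a : v \in F -> (forall x, x \in F -> V x - V v \in <[a]>%VS) ->
  (fdim V F <= 1)%N.
Proof.
move=> vF H; rewrite fdimE; apply: leq_trans (dimvS (D_sub vF H)) _.
by rewrite dim_vline leq_b1.
Qed.

Lemma fdim0 (F : {set T}) i j : fdim V F = 0%N -> i \in F -> j \in F -> V i = V j.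
Proof.
move=> /eqP; rewrite fdimE dimv_eq0 => /eqP D0 iF jF.
by have := memD iF jF; rewrite D0 memv0 subr_eq0 => /eqP.
Qed.

Lemma fdim_sub (F G : {set T}) : F \subset G -> (fdim V F <= fdim V G)%N.
Proof.
move=> FG; rewrite !fdimE; apply: dimvS; apply/span_subvP => w /allpairsP [[i j] [/= iF jF ->]].
by rewrite mem_enum in iF; rewrite mem_enum in jF; apply: memD; apply: (subsetP FG).
Qed.

End Dim.



Section Core.
Variable R : realFieldType.
Variable n : nat.
Variable T : finType.
Variable V : T -> 'rV[R]_n.

Lemma tilt (F : {set T}) v cv e y0 : v \in F ->
  (forall y, y != v -> dotv cv (V y) < dotv cv (V v)) -> y0 \in F ->
  0 < dotv e (V y0 - V v) ->
  exists t, [/\ 0 < t,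
    forall y, y \in F -> dotv (cv + t *: e) (V y) <= dotv (cv + t *: e) (V v) &
    exists2 y1, y1 \in F & y1 != v /\ dotv (cv + t *: e) (V y1) = dotv (cv + t *: e) (V v)].
Proof.
move=> vF Hcv y0F e0.
pose P := [set y in F | 0 < dotv e (V y - V v)].
have y0P : y0 \in P by rewrite inE y0F e0.
pose ratio y := (dotv cv (V v) - dotv cv (V y)) / dotv e (V y - V v).
have [y1 y1P Hy1] := exists_min ratio y0P.
move: (y1P); rewrite inE => /andP [y1F d1].
have y1v : y1 != v by apply: contraTneq d1 => ->; rewrite subrr dotv0r ltxx.
have num1 : 0 < dotv cv (V v) - dotv cv (V y1) by rewrite subr_gt0 Hcv.
have t0 : 0 < ratio y1 by rewrite divr_gt0.
have teq : ratio y1 * dotv e (V y1 - V v) = dotv cv (V v) - dotv cv (V y1).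
  by rewrite /ratio divfK // gt_eqF.
set t := ratio y1 in t0 Hy1 teq *.
exists t; split => //.
  move=> y yF; rewrite !dotvDl !dotvZl.
  have cvle : dotv cv (V y) <= dotv cv (V v).
    by case: (eqVneq y v) => [->//|yv]; apply: ltW; apply: Hcv.
  case: (leP (dotv e (V y - V v)) 0) => dle.
    have h : t * dotv e (V y - V v) <= 0 by rewrite mulr_ge0_le0 // ltW.
    by rewrite dotvBr mulrBr in h; lra.
  have yP : y \in P by rewrite inE yF dle.
  have := Hy1 y yP; rewrite /ratio ler_pdivlMr // => h.
  by rewrite dotvBr mulrBr in h; lra.
exists y1 => //; split => //; rewrite !dotvDl !dotvZl.
by rewrite dotvBr mulrBr in teq; lra.
Qed.

Lemma am_max c (F : {set T}) y x : y \in am V c F -> x \in F -> dotv c (V x) <= dotv c (V y).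
Proof. by rewrite inE => /andP[_ /forallP H] xF; move/implyP: (H x); apply. Qed.

Lemma am_in c (F : {set T}) y : y \in F -> (forall x, x \in F -> dotv c (V x) <= dotv c (V y)) ->
  y \in am V c F.
Proof. by move=> yF H; rewrite inE yF; apply/forallP => x; apply/implyP; apply: H. Qed.

Lemma am_sub c (F : {set T}) : am V c F \subset F.
Proof. by apply/subsetP => y; rewrite inE => /andP[]. Qed.

Lemma neighbor (cp : convex_position V) (G : {set T}) v :
  is_face V G -> v \in G -> (1 < #|G|)%N -> exists2 u, u \in G & adj V u v.
Proof.
move: {2}#|G| (leqnn #|G|) => m; elim: m G => [|m IH] G.
  by rewrite leqn0 => /eqP ->.
move=> cardG fG vG G2.
have [x xG xv] : exists2 x, x \in G & x != v.
  have : (0 < #|G :\ v|)%N by move: G2; rewrite (cardsD1 v G) vG add1n ltnS.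
  by case/card_gt0P => x; rewrite in_setD1 => /andP[xv xG]; exists x.
have Vinj := V_inj cp.
case E: (fdim V G) => [|[|k]].
- by move: xv; rewrite (Vinj _ _ (fdim0 E xG vG)) eqxx.
- exists x => //; split; first exact/eqP.
  by exists G; split.
pose a := V x - V v.
have [y yG ya] : exists2 y, y \in G & V y - V v \notin <[a]>%VS.
  apply/exists_inP; apply: contraT => /exists_inPn H.
  have H' : forall z, z \in G -> V z - V v \in <[a]>%VS.
    by move=> z zG; move/negPn: (H z zG).
  by have := fdim_le1 vG H'; rewrite E.
have [e [eU ey]] := sep ya.
have ea : dotv e a = 0 by apply: eU; apply: memv_line.
have [cv Hcv] := expose cp v.
have ey0 : 0 < dotv e (V y - V v) by rewrite ey ltr01.
have [t [t0 tmax [y1 y1G [y1v y1eq]]]] := tilt vG Hcv yG ey0.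
set c := cv + t *: e in tmax y1eq.
pose H := am V c G.
have fH : is_face V H by apply: subface fG vG.
have vH : v \in H by apply: am_in.
have y1H : y1 \in H by apply: am_in => // z zG; rewrite y1eq; apply: tmax.
have xH : x \notin H.
  apply/negP => /am_max /(_ vG).
  rewrite /c !dotvDl !dotvZl.
  have := Hcv x xv; move: ea; rewrite /a dotvBr; set p := dotv e (V x).
  move=> /eqP; rewrite subr_eq0 => /eqP ->; lra.
have HG : H \proper G.
  by apply/properP; split; [apply: am_sub | exists x].
have cardH : (#|H| <= m)%N by rewrite -ltnS; apply: leq_trans cardG; apply: proper_card.
have H2 : (1 < #|H|)%N.
  by rewrite (cardsD1 v H) vH add1n ltnS card_gt0; apply/set0Pn; exists y1; rewrite in_setD1 y1v.
have [u uH uadj] := IH H cardH fH vH H2.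
by exists u => //; apply: (subsetP (am_sub _ _)) uH.
Qed.

Lemma local_global (cp : convex_position V) (F : {set T}) v c :
  is_face V F -> v \in F ->
  (forall u, u \in F -> adj V u v -> dotv c (V u) <= dotv c (V v)) ->
  forall x, x \in F -> dotv c (V x) <= dotv c (V v).
Proof.
move=> fF vF Hloc x xF; rewrite leNgt; apply/negP => cx.
have [cv Hcv] := expose cp v.
have cx' : 0 < dotv c (V x - V v) by rewrite dotvBr subr_gt0.
have [t [t0 tmax [y1 y1F [y1v y1eq]]]] := tilt vF Hcv xF cx'.
set c2 := cv + t *: c in tmax y1eq.
pose H := am V c2 F.
have fH : is_face V H by apply: subface fF vF.
have vH : v \in H by apply: am_in.
have y1H : y1 \in H by apply: am_in => // z zF; rewrite y1eq; apply: tmax.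
have H2 : (1 < #|H|)%N.
  by rewrite (cardsD1 v H) vH add1n ltnS card_gt0; apply/set0Pn; exists y1; rewrite in_setD1 y1v.
have [u uH uadj] := neighbor cp fH vH H2.
have uF : u \in F by apply: (subsetP (am_sub _ _)) uH.
have hl := Hloc u uF uadj.
have h1 := am_max uH vF.
have uv : u != v by case: uadj => /eqP.
have h3 := Hcv u uv.
rewrite /c2 !dotvDl !dotvZl in h1.
have h4 : t * dotv c (V u) <= t * dotv c (V v) by rewrite ler_wpM2l // ltW.
lra.
Qed.

End Core.



Section Comb.
Variable R : realFieldType.
Variable n : nat.
Variable T : finType.
Variable V : T -> 'rV[R]_n.

Lemma nbP (F : {set T}) v u : reflect (u \in F /\ adj V u v) (u \in nb V F v).
Proof.
rewrite inE; apply: (iffP andP) => [[uF /asboolP]|[uF H]]; first by split.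
by split => //; apply/asboolP.
Qed.

Lemma face_incl (cp : convex_position V) (F H : {set T}) v :
  is_face V F -> is_face V H -> v \in F -> v \in H ->
  (forall u, u \in F -> adj V u v -> u \in H) -> F \subset H.
Proof.
move=> fF fH vF vH Hn; have [cH HH] := faceP fH.
apply/subsetP => x xF; apply/HH => z.
have vmax := proj1 (HH v) vH z.
suff : dotv cH (V v) <= dotv cH (V x) by apply: le_trans.
have LG := local_global (c := - cH) cp fF vF.
have : dotv (- cH) (V x) <= dotv (- cH) (V v).
  apply: LG => // u uF uadj; rewrite !dotvNl lerN2.
  exact: (proj1 (HH u) (Hn u uF uadj) v).
by rewrite !dotvNl lerN2.
Qed.

Lemma face_eq (cp : convex_position V) (F G : {set T}) v :
  is_face V F -> is_face V G -> v \in F -> v \in G -> nb V F v = nb V G v -> F = G.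
Proof.
move=> fF fG vF vG E; apply/eqP; rewrite eqEsubset; apply/andP; split.
  apply: (face_incl cp fF fG vF vG) => u uF uadj.
  by have /nbP[] : u \in nb V G v by rewrite -E; apply/nbP.
apply: (face_incl cp fG fF vG vF) => u uF uadj.
by have /nbP[] : u \in nb V F v by rewrite E; apply/nbP.
Qed.

Lemma sink_exists (O : rel T) (F : {set T}) x0 :
  orientation V O -> acyclic O -> x0 \in F -> exists v, sink_of V O F v.
Proof.
move=> [Oadj Oor] acy x0F.
pose reach v := [set w | connect O v w].
have [v vF Hv] := exists_min (fun v => (#|reach v|)%:R : R) x0F.
exists v; split => // u uF uadj.
have [[//]|[Ovu _]] := Oor u v uadj.
exfalso.
have sub : reach u \proper reach v.
  apply/properP; split.
    apply/subsetP => w; rewrite !inE; apply: connect_trans; exact: connect1.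
  exists v; first by rewrite inE connect0.
  by rewrite inE; apply: acy.
have := Hv u uF; rewrite ler_nat leqNgt; move/negP; apply.
exact: proper_card.
Qed.

Definition Wt (F : {set T}) v : #|nb V F v|.-tuple 'rV[R]_n :=
  [tuple V (enum_val i) - V v | i < #|nb V F v|].

Lemma Wt_nth (F : {set T}) v (i : 'I_#|nb V F v|) : (Wt F v)`_i = V (enum_val i) - V v.
Proof. by rewrite nth_mktuple. Qed.

Lemma Wt_sub (F : {set T}) v : v \in F -> (<<Wt F v>> <= DF V F)%VS.
Proof.
move=> vF; apply/span_subvP => w /mapP [i _ ->].
apply: memD => //; have /nbP[] := enum_valP i; done.
Qed.

Lemma DF_sub_Wt (cp : convex_position V) (F : {set T}) v :
  is_face V F -> v \in F -> (DF V F <= <<Wt F v>>)%VS.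
Proof.
move=> fF vF; apply: (D_sub vF) => x xF.
apply: contraT => /sep [c [cW cx]].
have Hl (c' : 'rV[R]_n) : (forall w, w \in <<Wt F v>>%VS -> dotv c' w = 0) ->
    dotv c' (V x) <= dotv c' (V v).
  move=> cW'; apply: (local_global cp fF vF) => // u uF uadj.
  have uN : u \in nb V F v by apply/nbP.
  have : dotv c' (V u - V v) = 0.
    apply: cW'; apply: memv_span; apply/mapP; exists (enum_rank_in uN u); first exact: mem_enum.
    by rewrite enum_rankK_in.
  by rewrite dotvBr => /eqP; rewrite subr_eq0 => /eqP ->.
have h1 := Hl c cW.
have h2 := Hl (- c) (fun w wW => ltac:(by rewrite dotvNl cW ?oppr0)).
move: cx h2; rewrite dotvBr !dotvNl lerN2; lra.
Qed.

Lemma fdim_le_deg (cp : convex_position V) (F : {set T}) v :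
  is_face V F -> v \in F -> (fdim V F <= #|nb V F v|)%N.
Proof.
move=> fF vF; rewrite fdimE; apply: leq_trans (dimvS (DF_sub_Wt cp fF vF)) _.
by apply: leq_trans (dim_span _) _; rewrite size_tuple.
Qed.

Lemma free_dual (k : nat) (W : k.-tuple 'rV[R]_n) :
  (forall i : 'I_k, exists c, (forall j : 'I_k, j != i -> dotv c W`_j = 0) /\ dotv c W`_i != 0) ->
  free W.
Proof.
move=> H; apply/freeP => a Ha i.
have [c [c0 ci]] := H i.
have := congr1 (dotv c) Ha; rewrite dotv_sumr dotv0r (bigD1 i) //= big1.
  by rewrite addr0 dotvZr => /eqP; rewrite mulf_eq0 (negbTE ci) orbF => /eqP.
by move=> j ji; rewrite dotvZr c0 // mulr0.
Qed.

End Comb.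



Section Simple.
Variable R : realFieldType.
Variable n : nat.
Variable T : finType.
Variable V : T -> 'rV[R]_n.

Lemma simple_face (cp : convex_position V) (H S : {set T}) v :
  is_face V H -> v \in H -> #|nb V H v| = fdim V H -> S \subset nb V H v ->
  exists G, [/\ is_face V G, v \in G, G \subset H & nb V G v = S].
Proof.
move=> fH vH deg SN.
have fW : free (Wt V H v).
  rewrite /free eqn_leq dim_span /= size_tuple.
  apply: (@leq_trans (fdim V H)); first by rewrite card_ord deg.
  by rewrite fdimE; apply: dimvS; apply: DF_sub_Wt.
have [c Hc] := solve_free (fun i => if enum_val i \in S then 0 else -1) fW.
have cu u : u \in nb V H v -> dotv c (V u - V v) = if u \in S then 0 else -1.
  move=> uN; have := Hc (enum_rank_in uN u); rewrite Wt_nth enum_rankK_in //.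
have cle u : u \in nb V H v -> dotv c (V u) <= dotv c (V v).
  move=> uN; have := cu u uN; rewrite dotvBr.
  by case: (u \in S) => h; lra.
have LG : forall x, x \in H -> dotv c (V x) <= dotv c (V v).
  apply: (local_global cp fH vH) => u uH uadj; apply: cle; exact/nbP.
exists (am V c H); split.
- exact: subface fH vH.
- exact: am_in.
- exact: am_sub.
apply/setP => u; apply/nbP/idP.
  case=> uG uadj.
  have uH : u \in H by apply: (subsetP (am_sub _ _ _)) uG.
  have uN : u \in nb V H v by apply/nbP.
  have := am_max uG vH; have := cu u uN; rewrite dotvBr.
  case: (u \in S) => // h1 h2.
  have : dotv c (V u) - dotv c (V v) < 0 by rewrite h1 ltrN10.
  by rewrite subr_lt0 ltNge h2.
move=> uS; have uN := subsetP SN u uS.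
case/nbP: (uN) => uH uadj; split => //.
apply: am_in => // x xH; apply: le_trans (LG x xH) _.
by have := cu u uN; rewrite uS dotvBr => h; lra.
Qed.

End Simple.



Lemma card_faces (R : realFieldType) (n d : nat) (T : finType) (V : T -> 'rV[R]_n) :
  fdim V [set: T] = d ->
  (\sum_(i < d.+1) fnum V i = #|[set F : {set T} | `[< is_face V F >]]|)%N.
Proof.
move=> fdT.
rewrite (eq_bigr (fun i : 'I_d.+1 =>
   \sum_(F in [set F : {set T} | `[< is_face V F >]]) (fdim V F == i) : nat)); last first.
  move=> i _; rewrite /fnum -sum1_card big_mkcond [RHS]big_mkcond /=.
  apply: eq_bigr => F _; rewrite !inE.
  case: asboolP => [[fF ->]|H]; first by rewrite (asboolT fF) eqxx.
  case: asboolP => // fF; case: eqP => // E; exfalso; exact: H.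
rewrite exchange_big /= -sum1_card; apply: eq_bigr => F _.
have Fd : (fdim V F < d.+1)%N by rewrite ltnS -fdT; apply: fdim_sub; apply: subsetT.
rewrite (bigD1 (Ordinal Fd)) //= eqxx big1 // => j ji.
by apply/eqP; rewrite eqb0; apply: contra ji => /eqP E; apply/eqP/val_inj.
Qed.

Lemma card_Pi (T : finType) (O : rel T) :
  fO O = #|[set p : T * {set T} | p.2 \subset [set u | O u p.1]]|.
Proof.
rewrite /fO /indeg.
under eq_bigr do rewrite -card_powerset -sum1_card.
rewrite pair_big_dep /= -sum1_card; apply: eq_bigl => -[v S].
by rewrite /= powersetE inE.
Qed.

Theorem lemma2p11 (R : realFieldType) (n d : nat) (T : finType)
  (V : T -> 'rV[R]_n) (O : rel T) :
  (0 < #|T|)%N ->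
  convex_position V ->
  fdim V [set: T] = d ->
  orientation V O ->
  acyclic O ->
  (fO O = \sum_(i < d.+1) fnum V i)%N <->
  [/\ (forall F, is_face V F -> exists! v, sink_of V O F v),
      (forall F, is_face V F -> forall v, sink_of V O F v ->
          deg_in V F v = fdim V F)
    & (forall v : T, exists F, [/\ is_face V F, sink_of V O F v &
          forall u, O u v -> u \in F])].
Proof.
move=> T0 cp fdT Or acy.
have [i0 _] := card_gt0P T0.
set FS := [set F : {set T} | `[< is_face V F >]].
set In := fun v => [set u | O u v].
set Pi := [set p : T * {set T} | p.2 \subset In p.1].
pose s F := odflt i0 [pick v | `[< sink_of V O F v >]].
have sP F : is_face V F -> sink_of V O F (s F).
  move=> fF; have [y yF] := face_elem i0 fF.
  have [w Hw] := sink_exists Or acy yF.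
  rewrite /s; case: pickP => [x /asboolP //|H].
  by have := H w; rewrite (asboolT Hw).
pose Phi F := (s F, nb V F (s F)).
have nbIn F v : sink_of V O F v -> nb V F v \subset In v.
  move=> [vF Hs]; apply/subsetP => u /nbP [uF uadj]; rewrite inE; exact: Hs.
have PhiPi F : F \in FS -> Phi F \in Pi.
  by rewrite inE => /asboolP fF; rewrite inE /=; apply: nbIn; apply: sP.
have Phi_inj : {in FS &, injective Phi}.
  move=> F G; rewrite !inE => /asboolP fF /asboolP fG [sE nE].
  have vF := (sP F fF).1; have vG := (sP G fG).1.
  rewrite sE in vF nE.
  exact: (face_eq cp fF fG vF vG nE).
have cardPhi : #|Phi @: FS| = #|FS| by apply: card_in_imset.
have subPhi : Phi @: FS \subset Pi by apply/subsetP => p /imsetP [F FF ->]; apply: PhiPi.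
rewrite (card_Pi O) (card_faces fdT) -/FS -/Pi.
have degE F v : deg_in V F v = #|nb V F v| by [].
split.
  move=> E.
  have PiE : Phi @: FS = Pi by apply/eqP; rewrite eqEcard subPhi cardPhi; exact: (eq_leq E).
  have surj p : p \in Pi -> exists2 G, is_face V G & Phi G = p.
    rewrite -PiE => /imsetP [G GF ->]; exists G => //; by move: GF; rewrite /FS inE => /asboolP.
  have sinkE F w : is_face V F -> sink_of V O F w -> s F = w.
    move=> fF Hw.
    have [G fG [sG nG]] := surj (w, nb V F w) (ltac:(by rewrite inE; apply: nbIn)).
    have wG := (sP G fG).1; rewrite sG in wG nG.
    by rewrite -(face_eq cp fG fF wG Hw.1 nG).
  split.
  - move=> F fF; exists (s F); split; first exact: sP.
    by move=> w Hw; rewrite (sinkE F w fF Hw).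
  - move=> F fF v Hv; rewrite degE; apply/eqP; rewrite eqn_leq (fdim_le_deg cp fF Hv.1) andbT.
    have fW : free (Wt V F v).
      apply: free_dual => i.
      set u := enum_val i.
      have uN : u \in nb V F v := enum_valP i.
      have Pin : (v, nb V F v :\ u) \in Pi.
        by rewrite inE /=; apply: subset_trans (subsetDl _ _) (nbIn F v Hv).
      have [G fG [sG nG]] := surj _ Pin.
      have vG := (sP G fG).1; rewrite sG in vG nG.
      have [cG HG] := faceP fG.
      exists cG; split.
      - move=> j ji; rewrite Wt_nth; set x := enum_val j.
        have xu : x != u by apply: contra ji => /eqP /enum_val_inj ->.
        have xN : x \in nb V F v := enum_valP j.
        have xG : x \in G.
          have : x \in nb V G v by rewrite nG in_setD1 xu xN.
          by case/nbP.
        have Ex : dotv cG (V x) = dotv cG (V v).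
          by apply/eqP; rewrite eq_le (proj1 (HG v) vG x) (proj1 (HG x) xG v).
        by rewrite dotvBr Ex subrr.
      - rewrite Wt_nth -/u dotvBr subr_eq0; apply/negP => /eqP Eu.
        have uG : u \in G by apply/HG => z; rewrite Eu; exact: (proj1 (HG v) vG z).
        have : u \in nb V G v.
          by apply/nbP; split => //; case/nbP: uN.
        by rewrite nG in_setD1 eqxx.
    move: fW; rewrite /free size_tuple => /eqP <-.
    by rewrite fdimE; apply: dimvS; exact: Wt_sub Hv.1.
  - move=> v.
    have [G fG [sG nG]] := surj (v, In v) (ltac:(by rewrite inE /=)).
    exists G; split => //; first by rewrite -sG; apply: sP.
    move=> u Ouv; have : u \in nb V G (s G) by rewrite nG inE.
    by case/nbP.
case=> H1 H2 H3.
suff : Pi \subset Phi @: FS.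
  move=> sub; apply/eqP; rewrite eqn_leq -cardPhi !subset_leq_card //.
apply/subsetP => -[v S]; rewrite inE /= => SIn.
have [Hf [fHf Hsink HIn]] := H3 v.
have nbE : nb V Hf v = In v.
  apply/setP => u; apply/idP/idP.
    by move/(subsetP (nbIn _ _ Hsink)).
  rewrite inE => Ouv; apply/nbP; split; first exact: HIn.
  exact: (Or.1 _ _ Ouv).
have deg := H2 Hf fHf v Hsink; rewrite degE in deg.
have SN : S \subset nb V Hf v by rewrite nbE.
have [G [fG vG _ nG]] := simple_face cp fHf Hsink.1 deg SN.
have Gsink : sink_of V O G v.
  split => // u uG uadj.
  have : u \in In v by apply: (subsetP SIn); rewrite -nG; apply/nbP.
  by rewrite inE.
have sG : s G = v.
  have [w [_ wuniq]] := H1 G fG.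
  by rewrite -(wuniq _ (sP G fG)) -(wuniq _ Gsink).
apply/imsetP; exists G; first by rewrite inE; apply/asboolP.
by rewrite /Phi sG nG.
Qed.
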